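(* Consider an $SU(2)$ monopole $(\nabla,\Phi)$ on $E\to\mathbb R^3$ and fix $O\in\mathbb R^3$. For an oriented line $\gamma$ that is not a spectral line, let $x$ be the point of $\gamma$ closest to $O$, and let $L^\pm_\gamma\subset E_x$ be the (one-dimensional) subspaces of initial values at $x$ of solutions of $(\nabla_{\dot\gamma}-i\Phi)s=0$ along $\gamma$ decaying at the positive, respectively negative, end of $\gamma$, so $E_x=L^+_\gamma\oplus L^-_\gamma$. Define $M_\gamma:E_x\to E_x$ to be $+1$ on $L^+_\gamma$ and $-1$ on $L^-_\gamma$. Then there are constants $R,C>0$ such that $\|M_\gamma\|\le C$ for all non-spectral lines $\gamma$ with $\|x-O\|\ge R$.
   Context: An $SU(2)$ monopole of charge $k$ on $\mathbb R^3$: $SU(2)$ connection $\nabla$ and Higgs field $\Phi$ on rank-2 $SU(2)$ bundle $E$ with $F_\nabla=*\nabla\Phi$ and Hitchin's boundary conditions $\|\Phi\|=1-k/2r+O(r^{-2})$, $\|\nabla\Phi\|=O(r^{-2})$; in particular there is a unitary gauge diagonalising $\Phi$ in which the connection matrix is $\begin{pmatrix}A&B\\-B^*&-A\end{pmatrix}$ with $B=O(r^{-2})$ ($r$ = distance from $O$). A spectral line is an oriented line along which a nonzero solution of $(\nabla_{\dot\gamma}-i\Phi)s=0$ decays at both ends. Norms are the Hermitian norms on $E_x$. *)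

(* Defs.v *)
From Stdlib Require Import Reals List.
From Coquelicot Require Import Coquelicot.
Open Scope R_scope.

Definition R3 : Type := (R * R * R)%type.
Definition coord (i : nat) (x : R3) : R :=
  match i with 0%nat => fst (fst x) | 1%nat => snd (fst x) | _ => snd x end.
Definition add3 (x y : R3) : R3 :=
  (fst (fst x) + fst (fst y), snd (fst x) + snd (fst y), snd x + snd y).
Definition sub3 (x y : R3) : R3 :=
  (fst (fst x) - fst (fst y), snd (fst x) - snd (fst y), snd x - snd y).
Definition scal3 (t : R) (x : R3) : R3 :=
  (t * fst (fst x), t * snd (fst x), t * snd x).
Definition dot3 (x y : R3) : R :=
  fst (fst x) * fst (fst y) + snd (fst x) * snd (fst y) + snd x * snd y.
Definition norm3 (x : R3) : R := sqrt (dot3 x x).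
Definition e3 (i : nat) : R3 :=
  match i with 0%nat => (1, 0, 0) | 1%nat => (0, 1, 0) | _ => (0, 0, 1) end.

Definition pd (i : nat) (f : R3 -> R) (x : R3) : R :=
  Derive (fun t => f (add3 x (scal3 t (e3 i)))) 0.
Fixpoint iter_pd (l : list nat) (f : R3 -> R) : R3 -> R :=
  match l with nil => f | i :: l' => pd i (iter_pd l' f) end.
Definition smoothR (f : R3 -> R) : Prop :=
  forall (l : list nat) (i : nat) (x : R3),
    ex_derive (fun t => iter_pd l f (add3 x (scal3 t (e3 i)))) 0 /\
    continuous (iter_pd l f) x.

Definition V2 : Type := (C * C)%type.
Record M2 : Type := mkM2 { m11 : C; m12 : C; m21 : C; m22 : C }.

Definition vadd (v w : V2) : V2 := (Cplus (fst v) (fst w), Cplus (snd v) (snd w)).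
Definition vsub (v w : V2) : V2 := (Cminus (fst v) (fst w), Cminus (snd v) (snd w)).
Definition vzero : V2 := (RtoC 0, RtoC 0).
Definition vnorm (v : V2) : R := sqrt (Cmod (fst v) ^ 2 + Cmod (snd v) ^ 2).

Definition mv (M : M2) (v : V2) : V2 :=
  (Cplus (Cmult (m11 M) (fst v)) (Cmult (m12 M) (snd v)),
   Cplus (Cmult (m21 M) (fst v)) (Cmult (m22 M) (snd v))).
Definition madd (M N : M2) : M2 :=
  mkM2 (Cplus (m11 M) (m11 N)) (Cplus (m12 M) (m12 N))
       (Cplus (m21 M) (m21 N)) (Cplus (m22 M) (m22 N)).
Definition msub (M N : M2) : M2 :=
  mkM2 (Cminus (m11 M) (m11 N)) (Cminus (m12 M) (m12 N))
       (Cminus (m21 M) (m21 N)) (Cminus (m22 M) (m22 N)).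
Definition mscal (c : C) (M : M2) : M2 :=
  mkM2 (Cmult c (m11 M)) (Cmult c (m12 M)) (Cmult c (m21 M)) (Cmult c (m22 M)).
Definition mmul (M N : M2) : M2 :=
  mkM2 (Cplus (Cmult (m11 M) (m11 N)) (Cmult (m12 M) (m21 N)))
       (Cplus (Cmult (m11 M) (m12 N)) (Cmult (m12 M) (m22 N)))
       (Cplus (Cmult (m21 M) (m11 N)) (Cmult (m22 M) (m21 N)))
       (Cplus (Cmult (m21 M) (m12 N)) (Cmult (m22 M) (m22 N))).
Definition comm (M N : M2) : M2 := msub (mmul M N) (mmul N M).
Definition madj (M : M2) : M2 :=
  mkM2 (Cconj (m11 M)) (Cconj (m21 M)) (Cconj (m12 M)) (Cconj (m22 M)).
Definition mtrace (M : M2) : C := Cplus (m11 M) (m22 M).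

Definition in_su2 (M : M2) : Prop := madj M = mscal (RtoC (-1)) M /\ mtrace M = RtoC 0.

Definition opnorm (M : M2) : R :=
  real (Lub_Rbar (fun r => exists v : V2, vnorm v = 1 /\ r = vnorm (mv M v))).

Definition smoothC (f : R3 -> C) : Prop :=
  smoothR (fun x => fst (f x)) /\ smoothR (fun x => snd (f x)).
Definition smoothM (F : R3 -> M2) : Prop :=
  smoothC (fun x => m11 (F x)) /\ smoothC (fun x => m12 (F x)) /\
  smoothC (fun x => m21 (F x)) /\ smoothC (fun x => m22 (F x)).
Definition pdC (i : nat) (f : R3 -> C) (x : R3) : C :=
  (pd i (fun y => fst (f y)) x, pd i (fun y => snd (f y)) x).
Definition pdM (i : nat) (F : R3 -> M2) (x : R3) : M2 :=
  mkM2 (pdC i (fun y => m11 (F y)) x) (pdC i (fun y => m12 (F y)) x)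
       (pdC i (fun y => m21 (F y)) x) (pdC i (fun y => m22 (F y)) x).

(* ---------- SU(2) monopoles (global unitary trivialisation E = R^3 x C^2) ----------
   The connection is nabla = d + sum_j A j dx_j with A j : R3 -> su(2), j = 0,1,2. *)
Definition covD (A : nat -> R3 -> M2) (Phi : R3 -> M2) (j : nat) (x : R3) : M2 :=
  madd (pdM j Phi x) (comm (A j x) (Phi x)).
Definition curv (A : nat -> R3 -> M2) (j k : nat) (x : R3) : M2 :=
  madd (msub (pdM j (A k) x) (pdM k (A j) x)) (comm (A j x) (A k x)).

Definition bogomolny (A : nat -> R3 -> M2) (Phi : R3 -> M2) : Prop :=
  forall x : R3,
    curv A 0 1 x = covD A Phi 2 x /\
    curv A 1 2 x = covD A Phi 0 x /\
    curv A 2 0 x = covD A Phi 1 x.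

Definition hitchin_bc (A : nat -> R3 -> M2) (Phi : R3 -> M2) (k : nat) (O : R3) : Prop :=
  exists R0 K : R, 0 < R0 /\
    forall x : R3, R0 <= norm3 (sub3 x O) ->
      Rabs (opnorm (Phi x) - (1 - INR k / (2 * norm3 (sub3 x O)))) <= K / norm3 (sub3 x O) ^ 2 /\
      opnorm (covD A Phi 0 x) + opnorm (covD A Phi 1 x) + opnorm (covD A Phi 2 x)
        <= K / norm3 (sub3 x O) ^ 2.

Definition monopole (A : nat -> R3 -> M2) (Phi : R3 -> M2) (k : nat) (O : R3) : Prop :=
  (forall j : nat, (j < 3)%nat -> smoothM (A j) /\ forall x, in_su2 (A j x)) /\
  smoothM Phi /\ (forall x, in_su2 (Phi x)) /\
  bogomolny A Phi /\ hitchin_bc A Phi k O.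

Definition line (x u : R3) (t : R) : R3 := add3 x (scal3 t u).
Definition Adir (A : nat -> R3 -> M2) (u : R3) (y : R3) : M2 :=
  madd (madd (mscal (RtoC (coord 0 u)) (A 0%nat y)) (mscal (RtoC (coord 1 u)) (A 1%nat y)))
       (mscal (RtoC (coord 2 u)) (A 2%nat y)).
Definition ode_rhs (A : nat -> R3 -> M2) (Phi : R3 -> M2) (x u : R3) (s : R -> V2) (t : R) : V2 :=
  vsub (mv (mscal Ci (Phi (line x u t))) (s t)) (mv (Adir A u (line x u t)) (s t)).
Definition is_sol (A : nat -> R3 -> M2) (Phi : R3 -> M2) (x u : R3) (s : R -> V2) : Prop :=
  forall t : R,
    is_derive (K := R_AbsRing) (V := C_R_NormedModule) (fun t => fst (s t)) t
              (fst (ode_rhs A Phi x u s t)) /\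
    is_derive (K := R_AbsRing) (V := C_R_NormedModule) (fun t => snd (s t)) t
              (snd (ode_rhs A Phi x u s t)).

Definition decays_pos (s : R -> V2) : Prop := is_lim (fun t => vnorm (s t)) p_infty 0.
Definition decays_neg (s : R -> V2) : Prop := is_lim (fun t => vnorm (s t)) m_infty 0.

Definition spectral (A : nat -> R3 -> M2) (Phi : R3 -> M2) (x u : R3) : Prop :=
  exists s : R -> V2, is_sol A Phi x u s /\ s 0 <> vzero /\ decays_pos s /\ decays_neg s.

Definition Lplus (A : nat -> R3 -> M2) (Phi : R3 -> M2) (x u : R3) (v : V2) : Prop :=
  exists s : R -> V2, is_sol A Phi x u s /\ decays_pos s /\ s 0 = v.
Definition Lminus (A : nat -> R3 -> M2) (Phi : R3 -> M2) (x u : R3) (v : V2) : Prop :=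
  exists s : R -> V2, is_sol A Phi x u s /\ decays_neg s /\ s 0 = v.

(* Main.v *)
Require Import Defs.
From Stdlib Require Import Reals Lra Psatz.
From Coquelicot Require Import Coquelicot.
Open Scope R_scope.

Lemma derC_re (f : R -> C) (x : R) (l : C) :
  is_derive (K := R_AbsRing) (V := C_R_NormedModule) f x l ->
  is_derive (fun t => fst (f t)) x (fst l) /\ is_derive (fun t => snd (f t)) x (snd l).
Proof.
  intros H. unfold is_derive in *. split.
  - eapply filterdiff_ext_lin.
    + apply (filterdiff_comp' (K:=R_AbsRing) (U:=R_NormedModule) (V:=C_R_NormedModule) (W:=R_NormedModule) f (fun z : C_R_NormedModule => fst z) x _ (fun z : C_R_NormedModule => fst z) H).
      apply filterdiff_linear. apply (is_linear_fst (U:=R_NormedModule) (V:=R_NormedModule)).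
    + intros y. reflexivity.
  - eapply filterdiff_ext_lin.
    + apply (filterdiff_comp' (K:=R_AbsRing) (U:=R_NormedModule) (V:=C_R_NormedModule) (W:=R_NormedModule) f (fun z : C_R_NormedModule => snd z) x _ (fun z : C_R_NormedModule => snd z) H).
      apply filterdiff_linear. apply (is_linear_snd (U:=R_NormedModule) (V:=R_NormedModule)).
    + intros y. reflexivity.
Qed.
Lemma cont_R3 (F : R3 -> R) (y : R3) : continuous F y ->
  forall eps, 0 < eps -> exists d, 0 < d /\ forall z : R3,
    Rabs (coord 0 z - coord 0 y) < d -> Rabs (coord 1 z - coord 1 y) < d ->
    Rabs (coord 2 z - coord 2 y) < d -> Rabs (F z - F y) < eps.
Proof.
  intros Hc eps He.
  pose proof (proj1 (filterlim_locally F (F y)) Hc (mkposreal eps He)) as H.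
  destruct H as [d Hd]. exists d. split. apply cond_pos.
  intros [[z0 z1] z2] H0 H1 H2. destruct y as [[y0 y1] y2].
  simpl in *. apply Hd. split; [split|]; assumption.
Qed.
Lemma add3_shift z c s w : add3 z (scal3 s w) = add3 (add3 z (scal3 c w)) (scal3 (s - c) w).
Proof. destruct z as [[? ?] ?]; destruct w as [[? ?] ?]; unfold add3, scal3; simpl; f_equal; [f_equal|]; ring. Qed.

Lemma step_deriv (f : R3 -> R) (i : nat) (z : R3) :
  (forall x, ex_derive (fun t => f (add3 x (scal3 t (e3 i)))) 0) ->
  forall c, is_derive (fun s => f (add3 z (scal3 s (e3 i)))) c (pd i f (add3 z (scal3 c (e3 i)))).
Proof.
  intros Hex c.
  set (w := add3 z (scal3 c (e3 i))).
  assert (H := Derive_correct _ _ (Hex w)).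
  assert (H2 : is_derive (fun s => f (add3 w (scal3 (s - c) (e3 i)))) c (pd i f w)).
  { replace (pd i f w) with (1 * pd i f w) by ring.
    apply (is_derive_comp (fun t => f (add3 w (scal3 t (e3 i)))) (fun s => s - c)).
    - replace (c - c) with 0 by ring. exact H.
    - auto_derive; auto; ring. }
  eapply is_derive_ext; [|exact H2]. intros s. simpl. unfold w. rewrite <- add3_shift. reflexivity.
Qed.

Lemma step_mvt (f : R3 -> R) (i : nat) (z : R3) (a : R) :
  (forall x, ex_derive (fun t => f (add3 x (scal3 t (e3 i)))) 0) ->
  exists th, Rabs th <= Rabs a /\
    f (add3 z (scal3 a (e3 i))) - f z = a * pd i f (add3 z (scal3 th (e3 i))).
Proof.
  intros Hex.
  destruct (MVT_cor4 (fun s => f (add3 z (scal3 s (e3 i)))) (fun s => pd i f (add3 z (scal3 s (e3 i)))) 0 (Rabs a)) with (b := a) as [c [Hc1 Hc2]].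
  - intros c _. apply step_deriv; auto.
  - rewrite Rminus_0_r. lra.
  - exists c. split.
    + rewrite !Rminus_0_r in Hc2. exact Hc2.
    + simpl in Hc1. replace (add3 z (scal3 0 (e3 i))) with z in Hc1. rewrite Hc1. ring.
      destruct z as [[? ?] ?]; unfold add3, scal3; simpl; f_equal; [f_equal|]; ring.
Qed.
Lemma chain0 (f : R3 -> R) (y u : R3) :
  (forall i x, ex_derive (fun t => f (add3 x (scal3 t (e3 i)))) 0) ->
  (forall i, continuous (pd i f) y) ->
  is_derive (fun h => f (add3 y (scal3 h u))) 0
    (coord 0 u * pd 0 f y + coord 1 u * pd 1 f y + coord 2 u * pd 2 f y).
Proof.
  intros Hex Hc. apply is_derive_Reals. intros eps He.
  destruct y as [[y0 y1] y2]. destruct u as [[u0 u1] u2]. simpl coord.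
  set (U := 1 + Rabs u0 + Rabs u1 + Rabs u2).
  assert (HU : 1 <= U) by (unfold U; pose proof (Rabs_pos u0); pose proof (Rabs_pos u1); pose proof (Rabs_pos u2); lra).
  set (e' := eps / U).
  assert (He' : 0 < e') by (unfold e'; apply Rdiv_lt_0_compat; lra).
  destruct (cont_R3 _ _ (Hc 0%nat) e' He') as [d0 [Hd0 C0]].
  destruct (cont_R3 _ _ (Hc 1%nat) e' He') as [d1 [Hd1 C1]].
  destruct (cont_R3 _ _ (Hc 2%nat) e' He') as [d2 [Hd2 C2]].
  set (m := Rmin d0 (Rmin d1 d2)).
  assert (Hm : 0 < m) by (unfold m; repeat apply Rmin_pos; auto).
  assert (Hmd0 : m <= d0) by (unfold m; apply Rmin_l).
  assert (Hmd1 : m <= d1) by (unfold m; eapply Rle_trans; [apply Rmin_r|apply Rmin_l]).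
  assert (Hmd2 : m <= d2) by (unfold m; eapply Rle_trans; [apply Rmin_r|apply Rmin_r]).
  assert (Hdel : 0 < m / U) by (apply Rdiv_lt_0_compat; lra).
  exists (mkposreal _ Hdel). intros h Hh0 Hh. simpl in Hh.
  assert (HhU : Rabs h * U < m).
  { apply (Rmult_lt_compat_r U) in Hh; [|lra]. unfold Rdiv in Hh. rewrite Rmult_assoc, Rinv_l in Hh; lra. }
  assert (Hu0 : Rabs h * Rabs u0 < m).
  { eapply Rle_lt_trans; [|exact HhU]. apply Rmult_le_compat_l. apply Rabs_pos. unfold U; pose proof (Rabs_pos u1); pose proof (Rabs_pos u2); lra. }
  assert (Hu1 : Rabs h * Rabs u1 < m).
  { eapply Rle_lt_trans; [|exact HhU]. apply Rmult_le_compat_l. apply Rabs_pos. unfold U; pose proof (Rabs_pos u0); pose proof (Rabs_pos u2); lra. }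
  assert (Hu2 : Rabs h * Rabs u2 < m).
  { eapply Rle_lt_trans; [|exact HhU]. apply Rmult_le_compat_l. apply Rabs_pos. unfold U; pose proof (Rabs_pos u1); pose proof (Rabs_pos u0); lra. }
  destruct (step_mvt f 0 ((y0,y1),y2) (h*u0) (Hex 0%nat)) as [t0 [Ht0 E0]].
  destruct (step_mvt f 1 ((y0 + h*u0,y1),y2) (h*u1) (Hex 1%nat)) as [t1 [Ht1 E1]].
  destruct (step_mvt f 2 ((y0 + h*u0,y1+h*u1),y2) (h*u2) (Hex 2%nat)) as [t2 [Ht2 E2]].
  rewrite Rabs_mult in Ht0, Ht1, Ht2.
  unfold add3, scal3, e3 in E0, E1, E2. simpl in E0, E1, E2.
  replace (add3 (y0, y1, y2) (scal3 (0 + h) (u0, u1, u2))) with (y0 + h*u0 + h*u2*0, y1 + h*u1 + h*u2*0, y2 + h*u2*1)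
    by (unfold add3, scal3; simpl; f_equal; [f_equal|]; ring).
  replace (add3 (y0, y1, y2) (scal3 0 (u0, u1, u2))) with (y0, y1, y2)
    by (unfold add3, scal3; simpl; f_equal; [f_equal|]; ring).
  replace (y0 + h * u0 + h * u1 * 0, y1 + h * u1 * 1, y2 + h * u1 * 0) with (y0 + h*u0, y1 + h*u1, y2) in E1
    by (f_equal; [f_equal|]; ring).
  replace (y0 + h * u0 * 1, y1 + h * u0 * 0, y2 + h * u0 * 0) with (y0 + h*u0, y1, y2) in E0
    by (f_equal; [f_equal|]; ring).
  set (Q0 := (y0 + t0 * 1, y1 + t0 * 0, y2 + t0 * 0)) in E0.
  set (Q1 := (y0 + h * u0 + t1 * 0, y1 + t1 * 1, y2 + t1 * 0)) in E1.
  set (Q2 := (y0 + h * u0 + t2 * 0, y1 + h * u1 + t2 * 0, y2 + t2 * 1)) in E2.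
  assert (B0 : Rabs (pd 0 f Q0 - pd 0 f (y0,y1,y2)) < e').
  { apply C0; unfold Q0; simpl; repeat rewrite Rmult_0_r, Rplus_0_r; rewrite ?Rmult_1_r;
    replace (y0 + t0 - y0) with t0 by ring; rewrite ?Rminus_diag, ?Rabs_R0; lra. }
  assert (B1 : Rabs (pd 1 f Q1 - pd 1 f (y0,y1,y2)) < e').
  { apply C1; unfold Q1; simpl; repeat rewrite Rmult_0_r, Rplus_0_r; rewrite ?Rmult_1_r;
    replace (y0 + h*u0 - y0) with (h*u0) by ring; replace (y1 + t1 - y1) with t1 by ring; rewrite ?Rminus_diag, ?Rabs_R0, ?Rabs_mult; lra. }
  assert (B2 : Rabs (pd 2 f Q2 - pd 2 f (y0,y1,y2)) < e').
  { apply C2; unfold Q2; simpl; repeat rewrite Rmult_0_r, Rplus_0_r; rewrite ?Rmult_1_r;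
    replace (y0 + h*u0 - y0) with (h*u0) by ring; replace (y1 + h*u1 - y1) with (h*u1) by ring;
    replace (y2 + t2 - y2) with t2 by ring; rewrite ?Rabs_mult; lra. }
  replace (y0 + h * u0 + h * u2 * 0, y1 + h * u1 + h * u2 * 0, y2 + h * u2 * 1)
    with (y0 + h * u0 + h * u2 * 0, y1 + h * u1 + h * u2 * 0, y2 + h * u2 * 1) by reflexivity.
  replace ((f (y0 + h * u0 + h * u2 * 0, y1 + h * u1 + h * u2 * 0, y2 + h * u2 * 1) - f (y0, y1, y2)) / h -
    (u0 * pd 0 f (y0, y1, y2) + u1 * pd 1 f (y0, y1, y2) + u2 * pd 2 f (y0, y1, y2)))
   with (u0 * (pd 0 f Q0 - pd 0 f (y0,y1,y2)) + u1 * (pd 1 f Q1 - pd 1 f (y0,y1,y2)) + u2 * (pd 2 f Q2 - pd 2 f (y0,y1,y2))).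
  2:{ rewrite <- (Rplus_0_r (f (y0 + h * u0 + h * u2 * 0, y1 + h * u1 + h * u2 * 0, y2 + h * u2 * 1) - f (y0, y1, y2))).
      replace (f (y0 + h * u0 + h * u2 * 0, y1 + h * u1 + h * u2 * 0, y2 + h * u2 * 1) - f (y0, y1, y2) + 0)
        with ((f (y0 + h * u0 + h * u2 * 0, y1 + h * u1 + h * u2 * 0, y2 + h * u2 * 1) - f (y0 + h * u0, y1 + h * u1, y2))
             + (f (y0 + h * u0, y1 + h * u1, y2) - f (y0 + h * u0, y1, y2)) + (f (y0 + h * u0, y1, y2) - f (y0, y1, y2))) by ring.
      rewrite E1, E0. rewrite E2. field. exact Hh0. }
  eapply Rle_lt_trans. apply Rabs_triang. eapply Rle_lt_trans. apply Rplus_le_compat_r. apply Rabs_triang.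
  rewrite !Rabs_mult.
  assert (e' * U = eps) by (unfold e'; field; lra).
  pose proof (Rabs_pos u0); pose proof (Rabs_pos u1); pose proof (Rabs_pos u2).
  assert (Rabs u0 * Rabs (pd 0 f Q0 - pd 0 f (y0, y1, y2)) <= Rabs u0 * e') by (apply Rmult_le_compat_l; lra).
  assert (Rabs u1 * Rabs (pd 1 f Q1 - pd 1 f (y0, y1, y2)) <= Rabs u1 * e') by (apply Rmult_le_compat_l; lra).
  assert (Rabs u2 * Rabs (pd 2 f Q2 - pd 2 f (y0, y1, y2)) <= Rabs u2 * e') by (apply Rmult_le_compat_l; lra).
  unfold U in *. nra.
Qed.

Lemma chain (f : R3 -> R) (x u : R3) (t : R) : smoothR f ->
  is_derive (fun t => f (line x u t)) t
    (coord 0 u * pd 0 f (line x u t) + coord 1 u * pd 1 f (line x u t) + coord 2 u * pd 2 f (line x u t)).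
Proof.
  intros Hs.
  assert (Hex : forall i x, ex_derive (fun t => f (add3 x (scal3 t (e3 i)))) 0).
  { intros i y. exact (proj1 (Hs nil i y)). }
  assert (Hc : forall i, continuous (pd i f) (line x u t)).
  { intros i. exact (proj2 (Hs (cons i nil) 0%nat (line x u t))). }
  pose proof (chain0 f (line x u t) u Hex Hc) as H0.
  set (L := coord 0 u * pd 0 f (line x u t) + coord 1 u * pd 1 f (line x u t) + coord 2 u * pd 2 f (line x u t)) in *.
  assert (H2 : is_derive (fun s => f (add3 (line x u t) (scal3 (s - t) u))) t L).
  { replace L with (1 * L) by ring.
    apply (is_derive_comp (fun h => f (add3 (line x u t) (scal3 h u))) (fun s => s - t)).
    - replace (t - t) with 0 by ring. exact H0.
    - auto_derive; auto; ring. }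
  eapply is_derive_ext; [|exact H2]. intros s. simpl. f_equal.
  unfold line. destruct x as [[? ?] ?]; destruct u as [[? ?] ?]; unfold add3, scal3; simpl; f_equal; [f_equal|]; ring.
Qed.

Lemma dR_mult (f g : R -> R) x df dg : is_derive f x df -> is_derive g x dg ->
  is_derive (fun t => f t * g t) x (df * g x + f x * dg).
Proof. intros H1 H2. apply (is_derive_mult f g x df dg H1 H2). intros; apply Rmult_comm. Qed.
Lemma dR_plus (f g : R -> R) x df dg : is_derive f x df -> is_derive g x dg ->
  is_derive (fun t => f t + g t) x (df + dg).
Proof. intros H1 H2. apply (is_derive_plus f g x df dg H1 H2). Qed.
Lemma dR_minus (f g : R -> R) x df dg : is_derive f x df -> is_derive g x dg ->
  is_derive (fun t => f t - g t) x (df - dg).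
Proof. intros H1 H2. apply (is_derive_minus f g x df dg H1 H2). Qed.
Lemma dR_const (c : R) x : is_derive (fun _ => c) x 0.
Proof. apply (is_derive_const c x). Qed.
Lemma dR_ext (f g : R -> R) x d d' : (forall t, f t = g t) -> d = d' -> is_derive f x d -> is_derive g x d'.
Proof. intros H -> H2. eapply is_derive_ext; eauto. Qed.

Lemma dR_ext2 (f g : R -> R) x d d' : is_derive f x d -> (forall t, f t = g t) -> d = d' -> is_derive g x d'.
Proof. intros H2 H ->. eapply is_derive_ext; eauto. Qed.

Definition derCC (z : R -> C) (t : R) (dz : C) : Prop :=
  is_derive (fun t => fst (z t)) t (fst dz) /\ is_derive (fun t => snd (z t)) t (snd dz).
Definition derV (v : R -> V2) (t : R) (dv : V2) : Prop :=
  derCC (fun t => fst (v t)) t (fst dv) /\ derCC (fun t => snd (v t)) t (snd dv).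
Definition derM (M : R -> M2) (t : R) (dM : M2) : Prop :=
  derCC (fun t => m11 (M t)) t (m11 dM) /\ derCC (fun t => m12 (M t)) t (m12 dM) /\
  derCC (fun t => m21 (M t)) t (m21 dM) /\ derCC (fun t => m22 (M t)) t (m22 dM).

Lemma derCC_mult z w t dz dw : derCC z t dz -> derCC w t dw ->
  derCC (fun t => Cmult (z t) (w t)) t (Cplus (Cmult dz (w t)) (Cmult (z t) dw)).
Proof.
  intros [H1 H2] [H3 H4]. unfold Cmult, Cplus; simpl. split.
  - eapply dR_ext; [intros; reflexivity| |apply dR_minus; apply dR_mult; eauto]. simpl; ring.
  - eapply dR_ext; [intros; reflexivity| |apply dR_plus; apply dR_mult; eauto]. simpl; ring.
Qed.
Lemma derCC_plus z w t dz dw : derCC z t dz -> derCC w t dw ->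
  derCC (fun t => Cplus (z t) (w t)) t (Cplus dz dw).
Proof. intros [H1 H2] [H3 H4]. unfold Cplus; simpl. split; apply dR_plus; auto. Qed.
Lemma derCC_minus z w t dz dw : derCC z t dz -> derCC w t dw ->
  derCC (fun t => Cminus (z t) (w t)) t (Cminus dz dw).
Proof. intros [H1 H2] [H3 H4]. split.
  - change (is_derive (fun t => fst (z t) - fst (w t)) t (fst dz - fst dw)); apply dR_minus; auto.
  - change (is_derive (fun t => snd (z t) - snd (w t)) t (snd dz - snd dw)); apply dR_minus; auto. Qed.
Lemma derCC_const (c : C) t : derCC (fun _ => c) t (RtoC 0).
Proof. split; simpl; apply dR_const. Qed.

Lemma derCC_ext z t dz dz' : derCC z t dz -> dz = dz' -> derCC z t dz'.
Proof. intros H ->; exact H. Qed.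
Lemma derCC_fext z z' t dz : derCC z t dz -> (forall t, z t = z' t) -> derCC z' t dz.
Proof. intros [H1 H2] E. split; eapply is_derive_ext; try eassumption; intros; simpl; rewrite E; reflexivity. Qed.

Ltac Ceq := apply injective_projections; unfold Cplus, Cmult, Cminus, Copp, RtoC; cbn [fst snd m11 m12 m21 m22]; ring.

Lemma derV_mv M v t dM dv : derM M t dM -> derV v t dv ->
  derV (fun t => mv (M t) (v t)) t (vadd (mv dM (v t)) (mv (M t) dv)).
Proof.
  intros [H1 [H2 [H3 H4]]] [H5 H6]. unfold mv, vadd; cbn [fst snd]. split.
  - eapply derCC_ext. apply derCC_plus; apply derCC_mult; eassumption. Ceq.
  - eapply derCC_ext. apply derCC_plus; apply derCC_mult; eassumption. Ceq.
Qed.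

Lemma derM_mscal c M t dM : derM M t dM -> derM (fun t => mscal c (M t)) t (mscal c dM).
Proof.
  intros [H1 [H2 [H3 H4]]]. unfold mscal; cbn [m11 m12 m21 m22].
  split; [|split; [|split]]; (eapply derCC_ext; [apply derCC_mult; [apply derCC_const|eassumption] | Ceq]).
Qed.

Lemma derV_vsub v w t dv dw : derV v t dv -> derV w t dw -> derV (fun t => vsub (v t) (w t)) t (vsub dv dw).
Proof. intros [H1 H2] [H3 H4]. split; apply derCC_minus; assumption. Qed.

Definition ip (v w : V2) : R :=
  fst (fst v) * fst (fst w) + snd (fst v) * snd (fst w) + fst (snd v) * fst (snd w) + snd (snd v) * snd (snd w).

Lemma der_ip v w t dv dw : derV v t dv -> derV w t dw ->
  is_derive (fun t => ip (v t) (w t)) t (ip dv (w t) + ip (v t) dw).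
Proof.
  intros [[H1 H2] [H3 H4]] [[H5 H6] [H7 H8]]. unfold ip.
  pose proof (dR_mult (fun t => fst (fst (v t))) (fun t => fst (fst (w t))) _ _ _ H1 H5) as K1.
  pose proof (dR_mult (fun t => snd (fst (v t))) (fun t => snd (fst (w t))) _ _ _ H2 H6) as K2.
  pose proof (dR_mult (fun t => fst (snd (v t))) (fun t => fst (snd (w t))) _ _ _ H3 H7) as K3.
  pose proof (dR_mult (fun t => snd (snd (v t))) (fun t => snd (snd (w t))) _ _ _ H4 H8) as K4.
  pose proof (dR_plus _ _ _ _ _ (dR_plus _ _ _ _ _ (dR_plus _ _ _ _ _ K1 K2) K3) K4) as K.
  eapply dR_ext2. exact K. intros; reflexivity. cbv beta. match goal with |- ?a = ?b => change (@eq R a b) end. ring.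
Qed.

Ltac unf := unfold comm, vsub, vadd, mv, mscal, madd, msub, mmul, ip, madj, mtrace in *;
  cbn [Cminus Cplus Cmult Copp Ci RtoC Cconj fst snd m11 m12 m21 m22] in *.
Ltac veq := apply injective_projections; (apply injective_projections; [unf; ring|unf; ring]).
Ltac meq := f_equal; (apply injective_projections; [unf; ring|unf; ring]).

Lemma su2_eqs a1 a2 b1 b2 c1 c2 d1 d2 :
  in_su2 (mkM2 (a1,a2) (b1,b2) (c1,c2) (d1,d2)) ->
  a1 = 0 /\ d1 = 0 /\ d2 = - a2 /\ c1 = - b1 /\ c2 = b2.
Proof.
  intros [H1 H2]. unfold madj, mscal, mtrace in *. cbn [m11 m12 m21 m22] in *.
  injection H1. injection H2. unfold Cplus, Cmult, Cconj, RtoC in *. cbn [fst snd] in *.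
  intros. repeat split; lra.
Qed.

Lemma su2_intro a b c : in_su2 (mkM2 (0,a) (b,c) (-b,c) (0,-a)).
Proof.
  split; unfold madj, mscal, mtrace; cbn [m11 m12 m21 m22]; unfold Cplus, Cmult, Cconj, RtoC; cbn [fst snd];
  f_equal; try f_equal; try ring.
Qed.

Lemma su2_destr (M : M2) : in_su2 M -> exists a b c, M = mkM2 (0,a) (b,c) (-b,c) (0,-a).
Proof.
  destruct M as [[a1 a2] [b1 b2] [c1 c2] [d1 d2]]. intros H.
  destruct (su2_eqs _ _ _ _ _ _ _ _ H) as [-> [-> [-> [-> ->]]]].
  exists a2, b1, b2. reflexivity.
Qed.

Lemma su2_add M N : in_su2 M -> in_su2 N -> in_su2 (madd M N).
Proof.
  intros HM HN. destruct (su2_destr M HM) as [a [b [c ->]]]. destruct (su2_destr N HN) as [a' [b' [c' ->]]].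
  replace (madd _ _) with (mkM2 (0,a+a') (b+b',c+c') (-(b+b'),c+c') (0,-(a+a'))).
  apply su2_intro. unfold madd, Cplus; cbn [fst snd m11 m12 m21 m22]. f_equal; f_equal; ring.
Qed.

Lemma su2_scal r M : in_su2 M -> in_su2 (mscal (RtoC r) M).
Proof.
  intros HM. destruct (su2_destr M HM) as [a [b [c ->]]].
  replace (mscal _ _) with (mkM2 (0,r*a) (r*b,r*c) (-(r*b),r*c) (0,-(r*a))).
  apply su2_intro. unfold mscal, Cmult, RtoC; cbn [fst snd m11 m12 m21 m22]. f_equal; f_equal; ring.
Qed.

Lemma su2_Adir (A : nat -> R3 -> M2) u y :
  (forall j, (j < 3)%nat -> in_su2 (A j y)) -> in_su2 (Adir A u y).
Proof.
  intros H. unfold Adir. apply su2_add; [apply su2_add|]; apply su2_scal; apply H; auto.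
Qed.

Definition mu (M : M2) : R := snd (m11 M) ^ 2 + fst (m12 M) ^ 2 + snd (m12 M) ^ 2.

Lemma ident_N (P Au : M2) (w : V2) : in_su2 Au ->
  ip (vsub (mv (mscal Ci P) w) (mv Au w)) w + ip w (vsub (mv (mscal Ci P) w) (mv Au w))
  = 2 * ip w (mv (mscal Ci P) w).
Proof.
  intros HA. destruct (su2_destr _ HA) as [a [b [c ->]]].
  destruct P as [[p1 p2] [p3 p4] [p5 p6] [p7 p8]]. destruct w as [[w1 w2] [w3 w4]].
  unf. ring.
Qed.

Lemma ident_mu (P : M2) (w : V2) : in_su2 P ->
  ip (mv P w) (mv P w) = mu P * ip w w.
Proof.
  intros HP. destruct (su2_destr _ HP) as [p [q [r ->]]]. destruct w as [[w1 w2] [w3 w4]].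
  unfold mu. unf. ring.
Qed.

Lemma ident_iM (M : M2) (w : V2) : ip (mv (mscal Ci M) w) (mv (mscal Ci M) w) = ip (mv M w) (mv M w).
Proof.
  destruct M as [[p1 p2] [p3 p4] [p5 p6] [p7 p8]]. destruct w as [[w1 w2] [w3 w4]]. unf. ring.
Qed.

Lemma ident_final (P : M2) (a b : V2) : in_su2 P ->
  ip a (mv (mscal Ci P) a) - ip b (mv (mscal Ci P) b) = ip (vadd a b) (mv (mscal Ci P) (vsub a b)).
Proof.
  intros HP. destruct (su2_destr _ HP) as [p [q [r ->]]].
  destruct a as [[w1 w2] [w3 w4]]. destruct b as [[v1 v2] [v3 v4]]. unf. ring.
Qed.

Lemma ip_subl x y z : ip (vsub x y) z = ip x z - ip y z.
Proof. destruct x as [[? ?] [? ?]]; destruct y as [[? ?] [? ?]]; destruct z as [[? ?] [? ?]]. unf. ring. Qed.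
Lemma ip_subr x y z : ip z (vsub x y) = ip z x - ip z y.
Proof. destruct x as [[? ?] [? ?]]; destruct y as [[? ?] [? ?]]; destruct z as [[? ?] [? ?]]. unf. ring. Qed.
Lemma ip_addr x y z : ip z (vadd x y) = ip z x + ip z y.
Proof. destruct x as [[? ?] [? ?]]; destruct y as [[? ?] [? ?]]; destruct z as [[? ?] [? ?]]. unf. ring. Qed.
Lemma ip_sym x y : ip x y = ip y x.
Proof. unfold ip. ring. Qed.
Lemma mv_sub M x y : mv M (vsub x y) = vsub (mv M x) (mv M y).
Proof. destruct x as [[? ?] [? ?]]; destruct y as [[? ?] [? ?]]; destruct M as [[? ?] [? ?] [? ?] [? ?]]. veq. Qed.
Lemma mv_madd M N x : mv (madd M N) x = vadd (mv M x) (mv N x).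
Proof. destruct x as [[? ?] [? ?]]; destruct N as [[? ?] [? ?] [? ?] [? ?]]; destruct M as [[? ?] [? ?] [? ?] [? ?]]. veq. Qed.
Lemma mscal_madd c M N : mscal c (madd M N) = madd (mscal c M) (mscal c N).
Proof. destruct N as [[? ?] [? ?] [? ?] [? ?]]; destruct M as [[? ?] [? ?] [? ?] [? ?]]; destruct c. unfold mscal, madd. meq. Qed.

Lemma herm P v z : in_su2 P -> ip v (mv (mscal Ci P) z) = ip (mv (mscal Ci P) v) z.
Proof.
  intros HP. destruct (su2_destr _ HP) as [p [q [r ->]]].
  destruct v as [[? ?] [? ?]]; destruct z as [[? ?] [? ?]]. unf. ring.
Qed.

Lemma comm_part P Au w : in_su2 P -> in_su2 Au ->
  - ip (mv Au w) (mv (mscal Ci P) w) - ip w (mv (mscal Ci P) (mv Au w))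
  = ip w (mv (mscal Ci (comm Au P)) w).
Proof.
  intros HP HA. destruct (su2_destr _ HA) as [a [b [c ->]]]. destruct (su2_destr _ HP) as [p [q [r ->]]].
  destruct w as [[w1 w2] [w3 w4]]. unf. ring.
Qed.

Lemma ident_q (P P' Au : M2) (w : V2) : in_su2 P -> in_su2 Au ->
  ip (vsub (mv (mscal Ci P) w) (mv Au w)) (mv (mscal Ci P) w)
  + ip w (vadd (mv (mscal Ci P') w) (mv (mscal Ci P) (vsub (mv (mscal Ci P) w) (mv Au w))))
  = 2 * mu P * ip w w + ip w (mv (mscal Ci (madd P' (comm Au P))) w).
Proof.
  intros HP HA.
  rewrite ip_subl, ip_addr, mv_sub, ip_subr.
  rewrite mscal_madd, mv_madd, ip_addr.
  rewrite <- (comm_part P Au w HP HA).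
  rewrite (herm P w (mv (mscal Ci P) w) HP).
  rewrite ident_iM, ident_mu by exact HP. ring.
Qed.

Lemma ip_nonneg v : 0 <= ip v v.
Proof. destruct v as [[a b] [c d]]. unfold ip; cbn [fst snd]. nra. Qed.

Lemma vnorm_ip v : vnorm v = sqrt (ip v v).
Proof.
  destruct v as [[a b] [c d]]. unfold vnorm, Cmod, ip; cbn [fst snd].
  rewrite !pow2_sqrt by nra. f_equal. ring.
Qed.

Lemma CS_sq v w : (ip v w) ^ 2 <= ip v v * ip w w.
Proof.
  destruct v as [[a b] [c d]]. destruct w as [[e f] [g h]]. unfold ip; cbn [fst snd].
  assert (E : (a*e + b*f + c*g + d*h)^2 + ((a*f - b*e)^2 + (a*g - c*e)^2 + (a*h - d*e)^2 + (b*g - c*f)^2 + (b*h - d*f)^2 + (c*h - d*g)^2)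
    = (a*a + b*b + c*c + d*d) * (e*e + f*f + g*g + h*h)) by ring.
  pose proof (pow2_ge_0 (a*f - b*e)); pose proof (pow2_ge_0 (a*g - c*e)); pose proof (pow2_ge_0 (a*h - d*e));
  pose proof (pow2_ge_0 (b*g - c*f)); pose proof (pow2_ge_0 (b*h - d*f)); pose proof (pow2_ge_0 (c*h - d*g)).
  lra.
Qed.

Lemma CS v w : Rabs (ip v w) <= vnorm v * vnorm w.
Proof.
  rewrite !vnorm_ip. rewrite <- sqrt_mult by apply ip_nonneg.
  rewrite <- sqrt_Rsqr_abs. apply sqrt_le_1_alt. unfold Rsqr. pose proof (CS_sq v w). simpl in H. lra.
Qed.

Lemma vnorm_nonneg v : 0 <= vnorm v.
Proof. rewrite vnorm_ip. apply sqrt_pos. Qed.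

Lemma vnorm_sq v : vnorm v * vnorm v = ip v v.
Proof. rewrite vnorm_ip. apply sqrt_sqrt. apply ip_nonneg. Qed.

Definition frob (M : M2) : R :=
  ip (m11 M, m12 M) (m11 M, m12 M) + ip (m21 M, m22 M) (m21 M, m22 M).

Lemma mv_frob M v : ip (mv M v) (mv M v) <= frob M * ip v v.
Proof.
  destruct M as [[p1 p2] [p3 p4] [p5 p6] [p7 p8]]. destruct v as [[w1 w2] [w3 w4]].
  unfold frob. unf.
  (* Lagrange: for row (a,b), |a x + b y|^2 + |a ybar - b xbar|^2 = (|a|^2+|b|^2)(|x|^2+|y|^2) *)
  assert (E1 : (p1*w1 - p2*w2 + (p3*w3 - p4*w4))^2 + (p1*w2 + p2*w1 + (p3*w4 + p4*w3))^2
     + ((p1*w3 + p2*w4) - (p3*w1 + p4*w2))^2 + ((p2*w3 - p1*w4) - (p4*w1 - p3*w2))^2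
     = (p1*p1 + p2*p2 + p3*p3 + p4*p4) * (w1*w1 + w2*w2 + w3*w3 + w4*w4)) by ring.
  assert (E2 : (p5*w1 - p6*w2 + (p7*w3 - p8*w4))^2 + (p5*w2 + p6*w1 + (p7*w4 + p8*w3))^2
     + ((p5*w3 + p6*w4) - (p7*w1 + p8*w2))^2 + ((p6*w3 - p5*w4) - (p8*w1 - p7*w2))^2
     = (p5*p5 + p6*p6 + p7*p7 + p8*p8) * (w1*w1 + w2*w2 + w3*w3 + w4*w4)) by ring.
  pose proof (pow2_ge_0 ((p1*w3 + p2*w4) - (p3*w1 + p4*w2))); pose proof (pow2_ge_0 ((p2*w3 - p1*w4) - (p4*w1 - p3*w2)));
  pose proof (pow2_ge_0 ((p5*w3 + p6*w4) - (p7*w1 + p8*w2))); pose proof (pow2_ge_0 ((p6*w3 - p5*w4) - (p8*w1 - p7*w2))).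
  lra.
Qed.

Definition scaleV (c : R) (v : V2) : V2 := (Cmult (RtoC c) (fst v), Cmult (RtoC c) (snd v)).

Lemma ip_scale c v : ip (scaleV c v) (scaleV c v) = c ^ 2 * ip v v.
Proof. destruct v as [[a b] [d e]]. unfold scaleV. unf. ring. Qed.

Lemma mv_scale M c v : mv M (scaleV c v) = scaleV c (mv M v).
Proof.
  destruct M as [[p1 p2] [p3 p4] [p5 p6] [p7 p8]]. destruct v as [[w1 w2] [w3 w4]].
  unfold scaleV. veq.
Qed.

Lemma vnorm_scale c v : vnorm (scaleV c v) = Rabs c * vnorm v.
Proof.
  rewrite !vnorm_ip, ip_scale, sqrt_mult by (try nra; apply ip_nonneg).
  f_equal. rewrite <- sqrt_Rsqr_abs. unfold Rsqr. f_equal. ring.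
Qed.

Lemma opnorm_bound M v : vnorm (mv M v) <= opnorm M * vnorm v.
Proof.
  set (E := fun r => exists v : V2, vnorm v = 1 /\ r = vnorm (mv M v)).
  assert (Hunit : forall w, vnorm w = 1 -> vnorm (mv M w) <= opnorm M).
  { intros w Hw. unfold opnorm. fold E.
    destruct (Lub_Rbar_correct E) as [Hub Hlub].
    assert (HE : E (vnorm (mv M w))) by (exists w; auto).
    assert (HB : is_ub_Rbar E (sqrt (frob M))).
    { intros r [w' [Hw' ->]]. simpl. rewrite vnorm_ip. apply sqrt_le_1_alt.
      pose proof (mv_frob M w'). rewrite vnorm_ip in Hw'.
      assert (ip w' w' = 1). { rewrite <- (sqrt_sqrt (ip w' w')) by apply ip_nonneg. rewrite Hw'. ring. }
      nra. }
    destruct (Lub_Rbar E) as [l| |] eqn:El.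
    - simpl. apply (Hub _ HE).
    - specialize (Hlub _ HB). simpl in Hlub. contradiction.
    - specialize (Hub _ HE). simpl in Hub. contradiction. }
  destruct (Req_dec (ip v v) 0) as [H0|H0].
  - assert (vnorm v = 0) by (rewrite vnorm_ip, H0; apply sqrt_0).
    assert (ip (mv M v) (mv M v) = 0). { pose proof (mv_frob M v). pose proof (ip_nonneg (mv M v)).
      assert (0 <= frob M) by (unfold frob; pose proof (ip_nonneg (m11 M, m12 M)); pose proof (ip_nonneg (m21 M, m22 M)); lra).
      rewrite H0 in H1. lra. }
    rewrite vnorm_ip, H1, sqrt_0. rewrite H. lra.
  - pose proof (ip_nonneg v).
    assert (Hn : 0 < vnorm v). { rewrite vnorm_ip. apply sqrt_lt_R0. lra. }
    assert (Hw : vnorm (scaleV (/ vnorm v) v) = 1).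
    { rewrite vnorm_scale, Rabs_pos_eq. field. lra. left; apply Rinv_0_lt_compat; lra. }
    pose proof (Hunit _ Hw) as K. rewrite mv_scale, vnorm_scale, Rabs_pos_eq in K.
    2: left; apply Rinv_0_lt_compat; lra.
    apply (Rmult_le_compat_r (vnorm v)) in K; [|lra].
    replace (/ vnorm v * vnorm (mv M v) * vnorm v) with (vnorm (mv M v)) in K by (field; lra). exact K.
Qed.

Lemma mu_nonneg M : 0 <= mu M.
Proof. unfold mu. nra. Qed.

Lemma opnorm_su2 M : in_su2 M -> opnorm M = sqrt (mu M).
Proof.
  intros HM. unfold opnorm.
  rewrite (is_lub_Rbar_unique _ (sqrt (mu M))). reflexivity.
  split.
  - intros r [w [Hw ->]]. simpl. right. rewrite vnorm_ip, ident_mu by exact HM.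
    rewrite vnorm_ip in Hw. assert (ip w w = 1). { rewrite <- (sqrt_sqrt (ip w w)) by apply ip_nonneg. rewrite Hw. ring. }
    rewrite H, Rmult_1_r. reflexivity.
  - intros b Hb. apply Hb. exists ((RtoC 1, RtoC 0)). split.
    + rewrite vnorm_ip. unfold ip, RtoC; cbn [fst snd]. replace (1*1+0*0+0*0+0*0) with 1 by ring. apply sqrt_1.
    + rewrite vnorm_ip, ident_mu by exact HM. unfold ip, RtoC; cbn [fst snd].
      f_equal. ring.
Qed.

Definition dirM (F : R3 -> M2) (u y : R3) : M2 :=
  madd (madd (mscal (RtoC (coord 0 u)) (pdM 0 F y)) (mscal (RtoC (coord 1 u)) (pdM 1 F y)))
       (mscal (RtoC (coord 2 u)) (pdM 2 F y)).

Lemma derCC_line (g : R3 -> C) x u t : smoothC g ->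
  derCC (fun t => g (line x u t)) t
   (Cplus (Cplus (Cmult (RtoC (coord 0 u)) (pdC 0 g (line x u t))) (Cmult (RtoC (coord 1 u)) (pdC 1 g (line x u t))))
          (Cmult (RtoC (coord 2 u)) (pdC 2 g (line x u t)))).
Proof.
  intros [H1 H2]. split.
  - eapply dR_ext2. exact (chain (fun y => fst (g y)) x u t H1). intros; reflexivity.
    unfold pdC. cbn [Cplus Cmult RtoC fst snd]. match goal with |- ?a = ?b => change (@eq R a b) end. ring.
  - eapply dR_ext2. exact (chain (fun y => snd (g y)) x u t H2). intros; reflexivity.
    unfold pdC. cbn [Cplus Cmult RtoC fst snd]. match goal with |- ?a = ?b => change (@eq R a b) end. ring.
Qed.

Lemma derM_line (F : R3 -> M2) x u t : smoothM F ->
  derM (fun t => F (line x u t)) t (dirM F u (line x u t)).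
Proof.
  intros [H1 [H2 [H3 H4]]].
  split; [|split; [|split]].
  - exact (derCC_line (fun y => m11 (F y)) x u t H1).
  - exact (derCC_line (fun y => m12 (F y)) x u t H2).
  - exact (derCC_line (fun y => m21 (F y)) x u t H3).
  - exact (derCC_line (fun y => m22 (F y)) x u t H4).
Qed.

Lemma derV_sol A Phi x u s t : is_sol A Phi x u s -> derV s t (ode_rhs A Phi x u s t).
Proof.
  intros H. destruct (H t) as [Ha Hb].
  split; [apply derC_re; exact Ha | apply derC_re; exact Hb].
Qed.

Section Line.
Variables (A : nat -> R3 -> M2) (Phi : R3 -> M2) (x u : R3) (s : R -> V2).
Hypothesis HA : forall j y, (j < 3)%nat -> in_su2 (A j y).
Hypothesis HP : forall y, in_su2 (Phi y).
Hypothesis HPs : smoothM Phi.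
Hypothesis Hsol : is_sol A Phi x u s.

Definition Nf (t : R) : R := ip (s t) (s t).
Definition qf (t : R) : R := ip (s t) (mv (mscal Ci (Phi (line x u t))) (s t)).
Definition Dm (t : R) : M2 := madd (dirM Phi u (line x u t)) (comm (Adir A u (line x u t)) (Phi (line x u t))).

Lemma N_der t : is_derive Nf t (2 * qf t).
Proof.
  pose proof (der_ip s s t _ _ (derV_sol A Phi x u s t Hsol) (derV_sol A Phi x u s t Hsol)) as K.
  eapply dR_ext2. exact K. intros; reflexivity.
  unfold ode_rhs. unfold qf. rewrite ident_N. reflexivity. apply su2_Adir. intros; apply HA; auto.
Qed.

Lemma q_der t : is_derive qf t (2 * mu (Phi (line x u t)) * Nf t + ip (s t) (mv (mscal Ci (Dm t)) (s t))).
Proof.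
  pose proof (derV_mv _ _ t _ _ (derM_mscal Ci _ t _ (derM_line Phi x u t HPs)) (derV_sol A Phi x u s t Hsol)) as K1.
  pose proof (der_ip s _ t _ _ (derV_sol A Phi x u s t Hsol) K1) as K.
  eapply dR_ext2. exact K. intros; reflexivity.
  unfold ode_rhs, Dm, Nf. cbv beta. rewrite ident_q. reflexivity. apply HP. apply su2_Adir. intros; apply HA; auto.
Qed.

End Line.

Lemma mat_decomp (P D0 D1 D2 A0 A1 A2 : M2) (u0 u1 u2 : R) :
  madd (madd (madd (mscal (RtoC u0) D0) (mscal (RtoC u1) D1)) (mscal (RtoC u2) D2))
       (comm (madd (madd (mscal (RtoC u0) A0) (mscal (RtoC u1) A1)) (mscal (RtoC u2) A2)) P)
  = madd (madd (mscal (RtoC u0) (madd D0 (comm A0 P))) (mscal (RtoC u1) (madd D1 (comm A1 P))))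
         (mscal (RtoC u2) (madd D2 (comm A2 P))).
Proof.
  destruct P as [[? ?] [? ?] [? ?] [? ?]].
  destruct D0 as [[? ?] [? ?] [? ?] [? ?]]. destruct D1 as [[? ?] [? ?] [? ?] [? ?]]. destruct D2 as [[? ?] [? ?] [? ?] [? ?]].
  destruct A0 as [[? ?] [? ?] [? ?] [? ?]]. destruct A1 as [[? ?] [? ?] [? ?] [? ?]]. destruct A2 as [[? ?] [? ?] [? ?] [? ?]].
  unfold comm, madd, msub, mmul, mscal. cbn [m11 m12 m21 m22].
  f_equal; (apply injective_projections; cbn [Cminus Cplus Cmult Copp RtoC fst snd]; ring).
Qed.

Lemma Dm_decomp A Phi x u t :
  Dm A Phi x u t = madd (madd (mscal (RtoC (coord 0 u)) (covD A Phi 0 (line x u t)))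
                              (mscal (RtoC (coord 1 u)) (covD A Phi 1 (line x u t))))
                        (mscal (RtoC (coord 2 u)) (covD A Phi 2 (line x u t))).
Proof. unfold Dm, dirM, Adir, covD. apply mat_decomp. Qed.

Lemma ip_iscal w r C : ip w (mv (mscal Ci (mscal (RtoC r) C)) w) = r * ip w (mv (mscal Ci C) w).
Proof. destruct C as [[? ?] [? ?] [? ?] [? ?]]. destruct w as [[? ?] [? ?]]. unf. ring. Qed.

Lemma opnorm_nonneg M : 0 <= opnorm M.
Proof.
  pose proof (opnorm_bound M (RtoC 1, RtoC 0)) as H.
  assert (vnorm (RtoC 1, RtoC 0) = 1).
  { rewrite vnorm_ip. unfold ip, RtoC; cbn [fst snd]. replace (1*1+0*0+0*0+0*0) with 1 by ring. apply sqrt_1. }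
  rewrite H0 in H. pose proof (vnorm_nonneg (mv M (RtoC 1, RtoC 0))). lra.
Qed.

Lemma ip_iC_bound w C : Rabs (ip w (mv (mscal Ci C) w)) <= opnorm C * ip w w.
Proof.
  eapply Rle_trans. apply CS.
  assert (vnorm (mv (mscal Ci C) w) = vnorm (mv C w)) by (rewrite !vnorm_ip, ident_iM; reflexivity).
  rewrite H. pose proof (opnorm_bound C w). pose proof (vnorm_nonneg w). rewrite <- vnorm_sq.
  nra.
Qed.

Lemma D_bound A Phi x u t w :
  Rabs (coord 0 u) <= 1 -> Rabs (coord 1 u) <= 1 -> Rabs (coord 2 u) <= 1 ->
  Rabs (ip w (mv (mscal Ci (Dm A Phi x u t)) w)) <=
   (opnorm (covD A Phi 0 (line x u t)) + opnorm (covD A Phi 1 (line x u t)) + opnorm (covD A Phi 2 (line x u t))) * ip w w.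
Proof.
  intros H0 H1 H2. rewrite Dm_decomp. rewrite !mscal_madd, !mv_madd, !ip_addr, !ip_iscal.
  set (c0 := covD A Phi 0 (line x u t)). set (c1 := covD A Phi 1 (line x u t)). set (c2 := covD A Phi 2 (line x u t)).
  pose proof (ip_iC_bound w c0). pose proof (ip_iC_bound w c1). pose proof (ip_iC_bound w c2).
  pose proof (opnorm_nonneg c0). pose proof (opnorm_nonneg c1). pose proof (opnorm_nonneg c2). pose proof (ip_nonneg w).
  eapply Rle_trans. apply Rabs_triang. eapply Rle_trans. apply Rplus_le_compat_r. apply Rabs_triang.
  rewrite !Rabs_mult.
  assert (Rabs (coord 0 u) * Rabs (ip w (mv (mscal Ci c0) w)) <= opnorm c0 * ip w w).
  { eapply Rle_trans. apply Rmult_le_compat_r. apply Rabs_pos. exact H0. lra. }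
  assert (Rabs (coord 1 u) * Rabs (ip w (mv (mscal Ci c1) w)) <= opnorm c1 * ip w w).
  { eapply Rle_trans. apply Rmult_le_compat_r. apply Rabs_pos. exact H1. lra. }
  assert (Rabs (coord 2 u) * Rabs (ip w (mv (mscal Ci c2) w)) <= opnorm c2 * ip w w).
  { eapply Rle_trans. apply Rmult_le_compat_r. apply Rabs_pos. exact H2. lra. }
  lra.
Qed.

Lemma mono (f df : R -> R) : (forall t, is_derive f t (df t)) -> (forall t, 0 <= df t) ->
  forall a b, a <= b -> f a <= f b.
Proof.
  intros Hd Hp a b Hab.
  destruct (MVT_cor4 f df a (b - a)) with (b := b) as [c [Hc _]].
  - intros; apply Hd.
  - rewrite Rabs_pos_eq; lra.
  - pose proof (Hp c). nra.
Qed.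

Lemma lim_pos (g : R -> R) : is_lim g p_infty 0 -> forall e, 0 < e -> exists M, forall t, M < t -> Rabs (g t) < e.
Proof.
  intros H e He. apply is_lim_spec in H. destruct (H (mkposreal e He)) as [M HM].
  exists M. intros t Ht. specialize (HM t Ht). simpl in HM. rewrite Rminus_0_r in HM. exact HM.
Qed.

Lemma lim_neg (g : R -> R) : is_lim g m_infty 0 -> forall e, 0 < e -> exists M, forall t, t < M -> Rabs (g t) < e.
Proof.
  intros H e He. apply is_lim_spec in H. destruct (H (mkposreal e He)) as [M HM].
  exists M. intros t Ht. specialize (HM t Ht). simpl in HM. rewrite Rminus_0_r in HM. exact HM.
Qed.

Lemma end_pos (f g : R -> R) : (forall a b, a <= b -> f a <= f b) ->
  (forall t, Rabs (f t) <= 3 * (g t) ^ 2) -> is_lim g p_infty 0 -> f 0 <= 0.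
Proof.
  intros Hm Hb Hl. destruct (Rle_lt_dec (f 0) 0) as [H|H]; [exact H|].
  set (e := Rmin 1 (f 0 / 6)).
  assert (He : 0 < e) by (unfold e; apply Rmin_pos; lra).
  assert (He1 : e <= 1) by apply Rmin_l. assert (He2 : e <= f 0 / 6) by apply Rmin_r.
  destruct (lim_pos g Hl e He) as [M HM].
  set (t := Rmax M 0 + 1).
  assert (Ht : M < t) by (unfold t; pose proof (Rmax_l M 0); lra).
  assert (Ht0 : 0 <= t) by (unfold t; pose proof (Rmax_r M 0); lra).
  specialize (HM t Ht). specialize (Hb t). specialize (Hm 0 t Ht0).
  assert (Rabs (g t) ^ 2 <= e * e). { simpl. rewrite Rmult_1_r. pose proof (Rabs_pos (g t)). nra. }
  rewrite <- pow2_abs in Hb. pose proof (Rle_abs (f t)). nra.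
Qed.

Lemma end_neg (f g : R -> R) : (forall a b, a <= b -> f a <= f b) ->
  (forall t, Rabs (f t) <= 3 * (g t) ^ 2) -> is_lim g m_infty 0 -> 0 <= f 0.
Proof.
  intros Hm Hb Hl. destruct (Rle_lt_dec 0 (f 0)) as [H|H]; [exact H|].
  set (e := Rmin 1 (- f 0 / 6)).
  assert (He : 0 < e) by (unfold e; apply Rmin_pos; lra).
  assert (He1 : e <= 1) by apply Rmin_l. assert (He2 : e <= - f 0 / 6) by apply Rmin_r.
  destruct (lim_neg g Hl e He) as [M HM].
  set (t := Rmin M 0 - 1).
  assert (Ht : t < M) by (unfold t; pose proof (Rmin_l M 0); lra).
  assert (Ht0 : t <= 0) by (unfold t; pose proof (Rmin_r M 0); lra).
  specialize (HM t Ht). specialize (Hb t). specialize (Hm t 0 Ht0).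
  assert (Rabs (g t) ^ 2 <= e * e). { simpl. rewrite Rmult_1_r. pose proof (Rabs_pos (g t)). nra. }
  rewrite <- pow2_abs in Hb. pose proof (Rle_abs (- f t)). rewrite Rabs_Ropp in H1. nra.
Qed.

Section Est.
Variables (A : nat -> R3 -> M2) (Phi : R3 -> M2) (x u : R3).
Hypothesis HA : forall j y, (j < 3)%nat -> in_su2 (A j y).
Hypothesis HP : forall y, in_su2 (Phi y).
Hypothesis HPs : smoothM Phi.
Hypothesis Hmu : forall t, 1/4 <= mu (Phi (line x u t)) <= 4.
Hypothesis Hcov : forall t, opnorm (covD A Phi 0 (line x u t)) + opnorm (covD A Phi 1 (line x u t)) + opnorm (covD A Phi 2 (line x u t)) <= 1/4.
Hypothesis Hu : Rabs (coord 0 u) <= 1 /\ Rabs (coord 1 u) <= 1 /\ Rabs (coord 2 u) <= 1.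

Lemma q_abs_gen (P : M2) (w : V2) : in_su2 P -> mu P <= 4 ->
  Rabs (ip w (mv (mscal Ci P) w)) <= 2 * ip w w.
Proof.
  intros HP0 Hm. eapply Rle_trans. apply CS.
  set (a := vnorm w). set (b := vnorm (mv (mscal Ci P) w)).
  assert (Hb : b * b = mu P * (a * a)).
  { unfold a, b. rewrite !vnorm_sq, ident_iM, ident_mu by exact HP0. reflexivity. }
  assert (0 <= a) by apply vnorm_nonneg. assert (0 <= b) by apply vnorm_nonneg.
  assert (0 <= mu P) by apply mu_nonneg.
  assert (b <= 2 * a) by nra.
  unfold a in *. rewrite <- vnorm_sq. nra.
Qed.

Variable s : R -> V2.
Hypothesis Hsol : is_sol A Phi x u s.

Definition qd (t : R) : R := 2 * mu (Phi (line x u t)) * Nf s t + ip (s t) (mv (mscal Ci (Dm A Phi x u t)) (s t)).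

Lemma qd_lb t : Nf s t / 4 <= qd t.
Proof.
  unfold qd. pose proof (D_bound A Phi x u t (s t) (proj1 Hu) (proj1 (proj2 Hu)) (proj2 (proj2 Hu))).
  pose proof (Hcov t). pose proof (Hmu t). pose proof (ip_nonneg (s t)). unfold Nf in *.
  pose proof (Rle_abs (- ip (s t) (mv (mscal Ci (Dm A Phi x u t)) (s t)))). rewrite Rabs_Ropp in H3.
  set (o := opnorm (covD A Phi 0 (line x u t)) + opnorm (covD A Phi 1 (line x u t)) + opnorm (covD A Phi 2 (line x u t))) in *.
  nra.
Qed.

Lemma q_abs t : Rabs (qf Phi x u s t) <= 2 * Nf s t.
Proof. apply q_abs_gen. apply HP. apply Hmu. Qed.

Lemma Nf_vnorm t : Nf s t = (vnorm (s t)) ^ 2.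
Proof. unfold Nf. rewrite <- vnorm_sq. ring. Qed.

Lemma est_pos : decays_pos s -> qf Phi x u s 0 <= - (1/16) * Nf s 0.
Proof.
  intros Hd.
  set (f := fun t => qf Phi x u s t + (1/16) * Nf s t).
  assert (Hder : forall t, is_derive f t (qd t + ((0 * Nf s t) + (1/16) * (2 * qf Phi x u s t)))).
  { intros t. apply dR_plus. apply (q_der A Phi x u s); auto. apply (dR_mult (fun _ => 1/16) (Nf s)). apply dR_const. apply (N_der A Phi x u s); auto. }
  assert (Hm : forall a b, a <= b -> f a <= f b).
  { apply (mono f _ Hder). intros t. pose proof (qd_lb t). pose proof (q_abs t).
    pose proof (Rle_abs (- qf Phi x u s t)). rewrite Rabs_Ropp in H1. lra. }
  assert (Hb : forall t, Rabs (f t) <= 3 * (vnorm (s t)) ^ 2).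
  { intros t. rewrite <- Nf_vnorm. unfold f. pose proof (q_abs t). pose proof (ip_nonneg (s t)).
    fold (Nf s t) in H0. eapply Rle_trans. apply Rabs_triang. rewrite Rabs_mult, (Rabs_pos_eq (1/16)) by lra.
    rewrite (Rabs_pos_eq (Nf s t)) by lra. lra. }
  pose proof (end_pos f (fun t => vnorm (s t)) Hm Hb Hd). unfold f in H. lra.
Qed.

Lemma est_neg : decays_neg s -> (1/16) * Nf s 0 <= qf Phi x u s 0.
Proof.
  intros Hd.
  set (f := fun t => qf Phi x u s t - (1/16) * Nf s t).
  assert (Hder : forall t, is_derive f t (qd t - ((0 * Nf s t) + (1/16) * (2 * qf Phi x u s t)))).
  { intros t. apply dR_minus. apply (q_der A Phi x u s); auto. apply (dR_mult (fun _ => 1/16) (Nf s)). apply dR_const. apply (N_der A Phi x u s); auto. }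
  assert (Hm : forall a b, a <= b -> f a <= f b).
  { apply (mono f _ Hder). intros t. pose proof (qd_lb t). pose proof (q_abs t).
    pose proof (Rle_abs (qf Phi x u s t)). lra. }
  assert (Hb : forall t, Rabs (f t) <= 3 * (vnorm (s t)) ^ 2).
  { intros t. rewrite <- Nf_vnorm. unfold f. pose proof (q_abs t). pose proof (ip_nonneg (s t)).
    fold (Nf s t) in H0. eapply Rle_trans. apply Rabs_triang. rewrite Rabs_Ropp, Rabs_mult, (Rabs_pos_eq (1/16)) by lra.
    rewrite (Rabs_pos_eq (Nf s t)) by lra. lra. }
  pose proof (end_neg f (fun t => vnorm (s t)) Hm Hb Hd). unfold f in H. lra.
Qed.

End Est.

Lemma final_ineq P a b : in_su2 P -> mu P <= 4 ->
  ip a (mv (mscal Ci P) a) <= - (1/16) * ip a a ->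
  (1/16) * ip b b <= ip b (mv (mscal Ci P) b) ->
  vnorm (vsub a b) <= 64 * vnorm (vadd a b).
Proof.
  intros HP Hm Ha Hb.
  pose proof (ident_final P a b HP) as E.
  assert (Par : ip (vadd a b) (vadd a b) + ip (vsub a b) (vsub a b) = 2 * (ip a a + ip b b)).
  { destruct a as [[? ?] [? ?]]; destruct b as [[? ?] [? ?]]. unf. ring. }
  set (v := vadd a b) in *. set (w := vsub a b) in *.
  set (V := vnorm v). set (W := vnorm w).
  assert (HV : 0 <= V) by apply vnorm_nonneg. assert (HW : 0 <= W) by apply vnorm_nonneg.
  assert (HVV : V * V = ip v v) by apply vnorm_sq. assert (HWW : W * W = ip w w) by apply vnorm_sq.
  set (Z := vnorm (mv (mscal Ci P) w)).
  assert (HZ : 0 <= Z) by apply vnorm_nonneg.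
  assert (HZZ : Z * Z = mu P * (W * W)).
  { unfold Z. rewrite vnorm_sq, ident_iM, ident_mu by exact HP. rewrite HWW. reflexivity. }
  assert (0 <= mu P) by apply mu_nonneg.
  assert (Z <= 2 * W) by nra.
  pose proof (CS v (mv (mscal Ci P) w)) as C. fold V Z in C.
  pose proof (Rle_abs (- ip v (mv (mscal Ci P) w))) as C2. rewrite Rabs_Ropp in C2.
  assert (H1 : (1/32) * (V*V + W*W) <= 2 * V * W) by nra.
  nra.
Qed.

Lemma line_dist x u O t : norm3 u = 1 -> dot3 (sub3 x O) u = 0 ->
  norm3 (sub3 x O) <= norm3 (sub3 (line x u t) O).
Proof.
  intros Hu Hp. unfold norm3 in *. apply sqrt_le_1_alt.
  assert (Huu : dot3 u u = 1).
  { assert (0 <= dot3 u u) by (destruct u as [[? ?] ?]; unfold dot3; cbn [fst snd]; nra).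
    rewrite <- (sqrt_sqrt (dot3 u u)) by exact H. rewrite Hu. ring. }
  assert (E : dot3 (sub3 (line x u t) O) (sub3 (line x u t) O) = dot3 (sub3 x O) (sub3 x O) + 2 * t * dot3 (sub3 x O) u + t * t * dot3 u u).
  { destruct x as [[? ?] ?]; destruct u as [[? ?] ?]; destruct O as [[? ?] ?]. unfold line, dot3, sub3, add3, scal3; cbn [fst snd]. ring. }
  rewrite E, Hp, Huu. nra.
Qed.

Lemma coord_bound u : norm3 u = 1 -> Rabs (coord 0 u) <= 1 /\ Rabs (coord 1 u) <= 1 /\ Rabs (coord 2 u) <= 1.
Proof.
  intros Hu. unfold norm3 in Hu.
  destruct u as [[u0 u1] u2]. unfold dot3 in Hu; cbn [fst snd] in Hu. simpl coord.
  assert (H : u0 * u0 + u1 * u1 + u2 * u2 = 1).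
  { assert (0 <= u0 * u0 + u1 * u1 + u2 * u2) by nra.
    rewrite <- (sqrt_sqrt (u0 * u0 + u1 * u1 + u2 * u2)) by exact H. rewrite Hu. ring. }
  assert (forall z, z * z <= 1 -> Rabs z <= 1).
  { intros z Hz. apply Rabs_le. split; nra. }
  split; [|split]; apply H0; nra.
Qed.

Lemma small_bounds (r K k : R) : 0 <= k -> 2 * k + 4 * Rabs K + 4 <= r ->
  k / (2 * r) <= 1/4 /\ Rabs K / r ^ 2 <= 1/16.
Proof.
  intros Hk Hr. pose proof (Rabs_pos K).
  assert (Hr0 : 0 < r) by lra.
  split.
  - apply (Rmult_le_reg_r (2 * r)); [lra|]. unfold Rdiv. rewrite Rmult_assoc, Rinv_l by lra. lra.
  - apply (Rmult_le_reg_r (r ^ 2)); [simpl; nra|]. unfold Rdiv. rewrite Rmult_assoc, Rinv_l by (simpl; nra).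
    simpl. nra.
Qed.

Theorem mainTheorem7 :
  forall (A : nat -> R3 -> M2) (Phi : R3 -> M2) (k : nat) (O : R3),
    (1 <= k)%nat ->
    monopole A Phi k O ->
    exists Rr Cc : R, 0 < Rr /\ 0 < Cc /\
      forall x u : R3,
        norm3 u = 1 ->
        dot3 (sub3 x O) u = 0 ->
        ~ spectral A Phi x u ->
        Rr <= norm3 (sub3 x O) ->
        forall v a b : V2,
          Lplus A Phi x u a -> Lminus A Phi x u b -> v = vadd a b ->
          vnorm (vsub a b) <= Cc * vnorm v.
Proof.
  intros A Phi k O Hk [HAall [HPs [HP [_ Hhit]]]].
  destruct Hhit as [R0 [K [HR0 Hh]]].
  pose proof (pos_INR k) as Hk0. pose proof (Rabs_pos K) as HK0.
  exists (R0 + 2 * INR k + 4 * Rabs K + 4), 64. split; [lra|]. split; [lra|].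
  intros x u Hu Hperp _ HR v a b [sa [Hsa [Hda Ha0]]] [sb [Hsb [Hdb Hb0]]] Hv.
  assert (HA : forall j y, (j < 3)%nat -> in_su2 (A j y)) by (intros j y Hj; exact (proj2 (HAall j Hj) y)).
  assert (Hpt : forall t, R0 + 2 * INR k + 4 * Rabs K + 4 <= norm3 (sub3 (line x u t) O)).
  { intros t. eapply Rle_trans. exact HR. apply line_dist; auto. }
  assert (Hbd : forall t, 1/4 <= mu (Phi (line x u t)) <= 4 /\
     opnorm (covD A Phi 0 (line x u t)) + opnorm (covD A Phi 1 (line x u t)) + opnorm (covD A Phi 2 (line x u t)) <= 1/4).
  { intros t. specialize (Hpt t). set (r := norm3 (sub3 (line x u t) O)) in *.
    destruct (Hh (line x u t)) as [H1 H2]. fold r. lra. fold r in H1, H2.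
    destruct (small_bounds r K (INR k)) as [S1 S2]; [exact Hk0|lra|].
    assert (Hr0 : 0 < r ^ 2) by (simpl; nra).
    assert (K / r ^ 2 <= Rabs K / r ^ 2).
    { unfold Rdiv. apply Rmult_le_compat_r. left; apply Rinv_0_lt_compat; exact Hr0. apply Rle_abs. }
    assert (0 <= INR k / (2 * r)).
    { unfold Rdiv. apply Rmult_le_pos. exact Hk0. left; apply Rinv_0_lt_compat; lra. }
    rewrite opnorm_su2 in H1 by apply HP.
    set (z := sqrt (mu (Phi (line x u t))) - (1 - INR k / (2 * r))) in H1.
    pose proof (Rle_abs z) as L1. pose proof (Rle_abs (- z)) as L2. rewrite Rabs_Ropp in L2. unfold z in *.
    pose proof (sqrt_pos (mu (Phi (line x u t)))).
    assert (Hs1 : 1/2 <= sqrt (mu (Phi (line x u t)))) by lra.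
    assert (Hs2 : sqrt (mu (Phi (line x u t))) <= 2) by lra.
    rewrite <- (sqrt_sqrt (mu (Phi (line x u t)))) by apply mu_nonneg.
    split; [split; nra | lra]. }
  assert (Hmu : forall t, 1/4 <= mu (Phi (line x u t)) <= 4) by (intros t; exact (proj1 (Hbd t))).
  assert (Hcov : forall t, opnorm (covD A Phi 0 (line x u t)) + opnorm (covD A Phi 1 (line x u t)) + opnorm (covD A Phi 2 (line x u t)) <= 1/4)
    by (intros t; exact (proj2 (Hbd t))).
  pose proof (coord_bound u Hu) as Hub.
  pose proof (est_pos A Phi x u HA HP HPs Hmu Hcov Hub sa Hsa Hda) as Ea.
  pose proof (est_neg A Phi x u HA HP HPs Hmu Hcov Hub sb Hsb Hdb) as Eb.
  unfold qf, Nf in Ea, Eb. rewrite Ha0 in Ea. rewrite Hb0 in Eb.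
  subst v. apply (final_ineq (Phi (line x u 0))); auto. apply Hmu.
Qed.
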